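(* Let $\mathcal{F}=(M,\{A^u\}_{u\in Q})$ be an FDFA and $\overline{B}$ the Büchi automaton constructed from $\mathcal{F}$ as in the context. For every $\omega$-word $w\in UP(L(\overline{B}))$ there exist a decomposition $(u,v)$ of $w$ (i.e., $u\in\Sigma^*$, $v\in\Sigma^+$, $w=uv^\omega$) and $n\geq1$ such that $v=v_1v_2\cdots v_n$ and for all $i\in\{1,\dots,n\}$, $v_i\in L(A^{M(u)})$ and $M(uv_i)=M(u)$.
   Context: $\Sigma$ is a finite alphabet. For a complete DFA $A$ and finite word $w$, $A(w)$ is the state reached from the initial state on $w$. An FDFA is $\mathcal{F}=(M,\{A^q\}_{q\in Q})$ with $M=(\Sigma,Q,q_0,\delta)$ a complete DFA without accepting states and each $A^q=(\Sigma,Q_q,s_q,F_q,\delta_q)$ a complete DFA. For an $\omega$-language $L'$, $UP(L')$ is the set of ultimately periodic words in $L'$. Construction of $\overline{B}$: for a DFA $D$ and states $s,t$, $D^s_t$ is $D$ with initial state $s$ and accepting set $\{t\}$. For $u\in Q$, $v\in F_u$ let $\overline{P}_{(u,v)}=M^u_u\times(A^u)^{s_u}_v$ (synchronous product, single accepting state $f_P$, initial state $s_P$, states $Q_P$, transitions $\delta_P$). From it form the Büchi automaton with $\epsilon$-transitions $(\Sigma,Q_P\cup\{f\},s_P,\{f\},\delta_P\cup\{(f,\epsilon,s_P),(f_P,\epsilon,f)\})$ with $f$ fresh. $\overline{B}$ has state set $Q$ plus disjoint copies of these automata for all $u\in Q$, $v\in F_u$; initial state $q_0$; accepting states the fresh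 states $f$; transitions $\delta$, those of the components, and $\epsilon$-transitions from $u\in Q$ to the initial state of the component for $(u,v)$. An infinite word is accepted if some run (with $\epsilon$-moves) reading it visits accepting states infinitely often. *)

(* Defs.v *)
From HB Require Import structures.
From mathcomp Require Import all_boot.
Set Implicit Arguments. Unset Strict Implicit. Unset Printing Implicit Defensive.

(* An FDFA over the finite alphabet Sigma: a leading complete DFA
   M = (Sigma, Q, q0, delta) without accepting states, and for every q : Q a
   complete progress DFA A^q = (Sigma, Q_q, s_q, F_q, delta_q). *)
Record fdfa (Sigma : finType) := FDFA {
  lstate : finType;
  linit : lstate;
  ltrans : lstate -> Sigma -> lstate;
  pstate : lstate -> finType;
  pinit : forall q, pstate q;
  ptrans : forall q, pstate q -> Sigma -> pstate q;
  pacc : forall q, {set pstate q}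
}.

Section FDFA.
Variables (Sigma : finType) (F : fdfa Sigma).

Definition Mrun (w : seq Sigma) : lstate F := foldl (@ltrans _ F) (linit F) w.

Definition Arun (q : lstate F) (w : seq Sigma) : pstate q :=
  foldl (@ptrans _ F q) (pinit q) w.
Definition Alang (q : lstate F) (w : seq Sigma) : Prop := Arun q w \in pacc q.

(* States of the Buchi automaton B-bar: the states of Q, plus for every
   u : Q and v \in F_u a disjoint copy of Q_P \cup {f}, where
   Q_P = Q x Q_u is the state set of P_(u,v) = M^u_u x (A^u)^{s_u}_v;
   [Some (p, t)] is the product state (p, t), [None] is the fresh state f. *)
Inductive bstate :=
| BQ (q : lstate F)
| BP (u : lstate F) (v : pstate u) (hv : v \in pacc u)
     (p : option (lstate F * pstate u)).

(* Transitions of B-bar; label [None] is an epsilon-move. *)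
Inductive bstep : bstate -> option Sigma -> bstate -> Prop :=
| bst_M q a : bstep (BQ q) (Some a) (BQ (ltrans q a))
| bst_enter u (v : pstate u) (hv : v \in pacc u) :
    bstep (BQ u) None (@BP u v hv (Some (u, pinit u)))
| bst_P u (v : pstate u) (hv : v \in pacc u) p t a :
    bstep (@BP u v hv (Some (p, t))) (Some a)
          (@BP u v hv (Some (ltrans p a, ptrans t a)))
| bst_fin u (v : pstate u) (hv : v \in pacc u) :              (* epsilon from f_P = (u, v) to f *)
    bstep (@BP u v hv (Some (u, v))) None (@BP u v hv None)
| bst_loop u (v : pstate u) (hv : v \in pacc u) :
    bstep (@BP u v hv None) None (@BP u v hv (Some (u, pinit u))).

Definition binit : bstate := BQ (linit F).

Definition baccepting (x : bstate) : Prop :=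
  match x with BP _ _ _ None => True | _ => False end.

(* A run with epsilon-moves reading the infinite word w: a sequence of states
   r and labels l with r 0 the initial state, consecutive steps, and the
   non-epsilon labels, in order, spelling exactly w (through the strictly
   increasing position map pos). *)
Definition brun (w : nat -> Sigma) (r : nat -> bstate)
    (l : nat -> option Sigma) : Prop :=
  [/\ r 0 = binit,
      forall i, bstep (r i) (l i) (r i.+1) &
      exists pos : nat -> nat,
        [/\ forall k, pos k < pos k.+1,
            forall k, l (pos k) = Some (w k) &
            forall j, (forall k, pos k <> j) -> l j = None]].

Definition baccepts (w : nat -> Sigma) : Prop :=
  exists r l, brun w r l /\ forall N, exists i, N <= i /\ baccepting (r i).

End FDFA.

Definition decomposition (Sigma : Type) (w : nat -> Sigma)
    (u v : seq Sigma) : Prop :=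
  0 < size v /\
  forall n, mkseq w (size u + n * size v) = u ++ flatten (nseq n v).

Definition ultimately_periodic (Sigma : Type) (w : nat -> Sigma) : Prop :=
  exists u v, decomposition w u v.

(* Main.v *)
Require Import Defs.
From HB Require Import structures.
From mathcomp Require Import all_boot.
From Stdlib Require Import Classical.
From mathcomp Require Import zify.
Set Implicit Arguments. Unset Strict Implicit. Unset Printing Implicit Defensive.

Section Proof.
Variables (Sigma : finType) (F : fdfa Sigma).

Definition good (u : lstate F) (s : seq Sigma) :=
  Alang u s /\ foldl (@ltrans _ F) u s = u.

Definition Inv (u0 : lstate F) (x : bstate F) (vs : seq (seq Sigma))
  (s : seq Sigma) : Prop :=
  match x with
  | BQ _ => False
  | BP u v hv o => u = u0 /\ (forall vi, vi \in vs -> good u vi) /\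
      match o with
      | None => s = [::]
      | Some (p, t) => foldl (@ltrans _ F) u s = p /\ Arun u s = t
      end
  end.

Lemma Inv_step u0 x o y vs s : bstep x o y -> Inv u0 x vs s ->
  exists vs' s', Inv u0 y vs' s' /\
    flatten vs' ++ s' = flatten vs ++ s ++ (if o is Some a then [:: a] else [::]).
Proof.
case => [q a| u v hv | u v hv p t a | u v hv | u v hv] //=.
- move=> [Hu [Hg [Hp Ht]]]; exists vs, (rcons s a); split.
    by rewrite /Arun !foldl_rcons -Hp -Ht.
  by rewrite cats1.
- move=> [Hu [Hg [Hp Ht]]]; exists (rcons vs s), [::]; split.
    split=> //; split=> // vi; rewrite mem_rcons in_cons => /orP [/eqP ->|/Hg //].
    by rewrite /good /Alang Ht Hp.
  by rewrite cats0 -cats1 flatten_cat /= !cats0.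
- move=> [Hu [Hg ->]]; exists vs, [::]; split=> //.
Qed.

Definition Glob (w : nat -> Sigma) (x : bstate F) n : Prop :=
  match x with
  | BQ q => Mrun F (mkseq w n) = q
  | BP u _ _ None => Mrun F (mkseq w n) = u
  | BP _ _ _ (Some (p, _)) => Mrun F (mkseq w n) = p
  end.

Lemma Glob_step w x o y n : bstep x o y -> Glob w x n ->
  (forall a, o = Some a -> a = w n) -> Glob w y (n + (o != None)).
Proof.
case => [q a| u v hv | u v hv p t a | u v hv | u v hv] /=; rewrite ?addn0 ?addn1 //.
- by move=> Hq /(_ a erefl) ->; rewrite mkseqS /Mrun foldl_rcons -Hq.
- by move=> Hq /(_ a erefl) ->; rewrite mkseqS /Mrun foldl_rcons -Hq.
Qed.

Fixpoint cnt (l : nat -> option Sigma) i :=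
  if i is i'.+1 then cnt l i' + (l i' != None) else 0.

Lemma cnt_mono l i d : cnt l i <= cnt l (i + d).
Proof. elim: d => [|d IH]; first by rewrite addn0. rewrite addnS /=. exact: leq_trans IH (leq_addr _ _). Qed.

Definition accb (x : bstate F) : bool :=
  match x with BP _ _ _ None => true | _ => false end.

Lemma catI (T : Type) (s t1 t2 : seq T) : s ++ t1 = s ++ t2 -> t1 = t2.
Proof. by elim: s => //= a s IH [] /IH. Qed.

Lemma mkseq_split (w : nat -> Sigma) a b : a <= b ->
  mkseq w b = mkseq w a ++ map w (iota a (b - a)).
Proof. by move=> hab; rewrite /mkseq -{1}(subnKC hab) iotaD map_cat. Qed.
End Proof.


Lemma per_lem (T : Type) (w : nat -> T) (x y : seq T) :
  0 < size y ->
  (forall n, mkseq w (size x + n * size y) = x ++ flatten (nseq n y)) ->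
  forall t, size x <= t -> w (t + size y) = w t.
Proof.
move=> hy Hxy t ht.
have e1 : w (t + size y) = nth (w 0) (x ++ flatten (nseq t.+2 y)) (t + size y).
  rewrite -Hxy nth_mkseq //. rewrite !mulSn. nia.
have e2 : w t = nth (w 0) (x ++ flatten (nseq t.+1 y)) t.
  rewrite -Hxy nth_mkseq //. rewrite mulSn. nia.
rewrite e1 e2 (_ : flatten (nseq t.+2 y) = y ++ flatten (nseq t.+1 y)) //.
set Fl := flatten _; clearbody Fl.
rewrite catA !nth_cat size_cat !ifF; try (apply/negbTE; rewrite -leqNgt; lia).
by congr nth; lia.
Qed.

Lemma perm_lem (T : Type) (w : nat -> T) (a p : nat) :
  (forall t, a <= t -> w (t + p) = w t) ->
  forall m t, a <= t -> w (t + m * p) = w t.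
Proof.
move=> per; elim=> [|m IH] t ht; first by rewrite mul0n addn0.
have -> : t + m.+1 * p = (t + m * p) + p by rewrite mulSn; lia.
by rewrite per ?IH //; lia.
Qed.

Lemma flatS (T : Type) (s : seq T) n : flatten (nseq n.+1 s) = flatten (nseq n s) ++ s.
Proof. by elim: n => [|n IH] /=; rewrite ?cats0 // -catA -IH. Qed.

Lemma mkseq_split' (T : Type) (w : nat -> T) a b : a <= b ->
  mkseq w b = mkseq w a ++ map w (iota a (b - a)).
Proof. by move=> hab; rewrite /mkseq -{1}(subnKC hab) iotaD map_cat. Qed.

Lemma rep_lem (T : Type) (w : nat -> T) (x0 p : nat) :
  (forall t, x0 <= t -> w (t + p) = w t) ->
  forall a L, x0 <= a -> p %| L -> forall n,
    mkseq w (a + n * L) = mkseq w a ++ flatten (nseq n (map w (iota a L))).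
Proof.
move=> per a L ha /dvdnP [m hm]; elim=> [|n IH]; first by rewrite mul0n addn0 cats0.
rewrite (@mkseq_split' _ w (a + n * L)); last by rewrite mulSn; lia.
rewrite IH flatS -catA; congr (_ ++ _); congr (_ ++ _).
have -> : a + n.+1 * L - (a + n * L) = L by rewrite mulSn; lia.
rewrite addnC iotaDl -map_comp; apply/eq_in_map => t; rewrite mem_iota /= => /andP [h1 _].
by rewrite addnC hm mulnA (perm_lem per) //; lia.
Qed.

Theorem lemma5 (Sigma : finType) (F : fdfa Sigma) (w : nat -> Sigma) :
  ultimately_periodic w -> baccepts F w ->
  exists (u v : seq Sigma) (vs : seq (seq Sigma)),
    [/\ decomposition w u v,
        1 <= size vs,
        v = flatten vs &
        forall vi, vi \in vs ->
          Alang (Mrun F u) vi /\ Mrun F (u ++ vi) = Mrun F u].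
Proof.
move=> [x [y [Hy Hxy]]] [r [l [[H0 Hst [pos [Hpos Hl Hnone]]] Hacc]]].
set p := size y.
have mono : forall k1 k2, k1 < k2 -> pos k1 < pos k2.
  move=> k1; elim=> // k2 IH; rewrite ltnS leq_eqVlt => /orP [/eqP -> //|/IH].
  by move/ltn_trans; apply.
have gap : forall a d, (forall j, a <= j < a + d -> l j = None) -> cnt l (a + d) = cnt l a.
  move=> a; elim=> [|d IH] H; first by rewrite addn0.
  rewrite addnS /= IH; last by move=> j /andP [h1 h2]; apply: H; lia.
  by rewrite H ?addn0 //; lia.
have cnt_pos : forall k, cnt l (pos k) = k.
  elim=> [|k IH].
    rewrite -(add0n (pos 0)) gap //= => j hj; apply: Hnone => k hk.
    case: k hk => [|k] hk; first by move: hj; rewrite hk; lia.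
    have := mono 0 k.+1 erefl; move: hj; rewrite hk; lia.
  have hlt := Hpos k.
  rewrite -(subnKC hlt) gap /=; first by rewrite Hl IH addn1.
  move=> j /andP [h1 h2]; apply: Hnone => k' hk'; subst j.
  case: (ltngtP k' k) => [/mono|hgt|hkk].
  - by move: h1; lia.
  - case: (eqVneq k' k.+1) => [hk|hne]; first by move: h2; rewrite hk (subnKC hlt); lia.
    have /mono : k.+1 < k' by lia.
    by move: h2; rewrite (subnKC hlt); lia.
  - by move: h1; rewrite hkk; lia.
have letter : forall j a, l j = Some a -> a = w (cnt l j).
  move=> j a hj; case: (classic (exists k, pos k = j)) => [[k hk]|hn].
    by move: hj; rewrite -hk Hl cnt_pos => -[].
  by rewrite Hnone in hj => // k hk; apply: hn; exists k.
have glob : forall j, Glob w (r j) (cnt l j).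
  elim=> [|j IH]; first by rewrite H0.
  by apply: (Glob_step (Hst j) IH) => a; apply: letter.
have seg : forall i1 u v hv, r i1 = @BP _ F u v hv None -> forall d,
    exists vs s, Inv u (r (i1+d)) vs s /\
      mkseq w (cnt l i1) ++ flatten vs ++ s = mkseq w (cnt l (i1 + d)).
  move=> i1 u v hv hr; elim=> [|d [vs [s [hI hw]]]].
    by exists [::], [::]; rewrite addn0 hr /= cats0.
  have [vs' [s' [hI' hw']]] := Inv_step (Hst (i1+d)) hI.
  exists vs', s'; rewrite addnS; split => //=.
  move: hw'; case E: (l (i1+d)) => [a|] hw'; rewrite hw'.
    by rewrite addn1 mkseqS -hw -(letter _ _ E) -cats1 !catA.
  by rewrite addn0 cats0.
have unb : forall N, exists i, accb (r i) && (N <= cnt l i).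
  move=> N; have [i [hi ha]] := Hacc (pos N); exists i; apply/andP; split.
    by move: ha; case: (r i) => // u v hv [].
  by have := cnt_mono l (pos N) (i - pos N); rewrite subnKC // cnt_pos.
pose g N := ex_minn (unb N).
have gP : forall N, accb (r (g N)) && (N <= cnt l (g N)).
  by move=> N; rewrite /g; case: ex_minnP.
pose idx k := iter k (fun i => g (cnt l i).+1) (g (size x)).
have idxS : forall k, idx k.+1 = g (cnt l (idx k)).+1 by [].
have idx0 : idx 0 = g (size x) by [].
clearbody idx g.
have idxP : forall k, accb (r (idx k)) && (size x <= cnt l (idx k)).
  elim => [|k IH]; first by rewrite idx0; exact: gP.
  rewrite idxS; have /andP[h1 h2] := gP (cnt l (idx k)).+1.
  by rewrite h1 /=; case/andP: IH => _ hh; apply: leq_trans h2; apply: leq_trans hh _.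
have cntS : forall k, cnt l (idx k) < cnt l (idx k.+1).
  by move=> k; rewrite idxS; have /andP[_ h2] := gP (cnt l (idx k)).+1.
have cnt_inc : forall k1 k2, k1 < k2 -> cnt l (idx k1) < cnt l (idx k2).
  move=> k1; elim=> // k2 IH; rewrite ltnS leq_eqVlt => /orP [/eqP -> //|/IH].
  by move/ltn_trans; apply.
have idx_le : forall k1 k2, k1 < k2 -> idx k1 <= idx k2.
  move=> k1 k2 hk; rewrite leqNgt; apply/negP => h.
  have := cnt_mono l (idx k2) (idx k1 - idx k2); rewrite subnKC; last exact: ltnW h.
  by rewrite leqNgt cnt_inc.
have per := per_lem Hy Hxy.
have rep := rep_lem per.
have fin : forall i1 d, accb (r i1) -> accb (r (i1+d)) -> size x <= cnt l i1 ->
    cnt l i1 < cnt l (i1+d) -> p %| cnt l (i1+d) - cnt l i1 ->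
  exists (u v : seq Sigma) (vs : seq (seq Sigma)),
    [/\ decomposition w u v,
        1 <= size vs,
        v = flatten vs &
        forall vi, vi \in vs ->
          Alang (Mrun F u) vi /\ Mrun F (u ++ vi) = Mrun F u].
  move=> i1 d ha1 ha2 hx hlt hdv.
  case E1: (r i1) ha1 => [q|u v hv [[pp tt]|]] //= _.
  have [vs [s [hI hw]]] := seg i1 u v hv E1 d.
  have hg := glob i1; rewrite E1 /= in hg.
  move: hI ha2; case: (r (i1+d)) => [q|u' v' hv' [[pp tt]|]] //= [hu [hgood hs]] _.
  subst s u'.
  have hV : flatten vs = map w (iota (cnt l i1) (cnt l (i1+d) - cnt l i1)).
    apply: (@catI _ (mkseq w (cnt l i1))); rewrite -mkseq_split; first by rewrite -hw cats0.
    exact: ltnW hlt.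
  exists (mkseq w (cnt l i1)), (flatten vs), vs; split => //.
  - split; first by rewrite hV size_map size_iota subn_gt0.
    by move=> n; rewrite size_mkseq hV size_map size_iota; apply: rep.
  - case: vs hV {hw hgood} => [|v0 vs0] hV //; move: (congr1 size hV); rewrite size_map size_iota /= => h0.
    by move: hlt; rewrite -subn_gt0 -h0.
  - move=> vi hvi; have [ha hf] := hgood vi hvi.
    by rewrite /Mrun in hg; rewrite /Mrun foldl_cat hg.
have hp : 0 < p by [].
pose f (k : 'I_p.+1) : 'I_p := Ordinal (ltn_pmod (cnt l (idx k)) hp).
have : ~~ injectiveb f.
  by apply/negP => /injectiveP /leq_card; rewrite !card_ord ltnn.
case/injectivePn => k1 [k2 hne hf].
have hmod : cnt l (idx k1) = cnt l (idx k2) %[mod p] by move: hf => /(congr1 val).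
have key : forall a b, a < b -> cnt l (idx a) = cnt l (idx b) %[mod p] -> exists (u v : seq Sigma) (vs : seq (seq Sigma)),
    [/\ decomposition w u v,
        1 <= size vs,
        v = flatten vs &
        forall vi, vi \in vs ->
          Alang (Mrun F u) vi /\ Mrun F (u ++ vi) = Mrun F u].
  move=> a b hab hm.
  have e : idx a + (idx b - idx a) = idx b by rewrite subnKC // idx_le.
  have := fin (idx a) (idx b - idx a); rewrite e; apply.
  - by case/andP: (idxP a).
  - by case/andP: (idxP b).
  - by case/andP: (idxP a).
  - exact: cnt_inc.
  - rewrite -eqn_mod_dvd; first by apply/eqP; rewrite hm.
    by apply: ltnW; apply: cnt_inc.
case: (ltngtP k1 k2) => h.
- exact: key h hmod.
- exact: key h (esym hmod).
- by move: hne; rewrite (val_inj h) eqxx.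
Qed.
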